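(* Let $M$ be a complex $N\times N$ matrix ($N\ge 1$) whose eigenvalues $\lambda_1,\dots,\lambda_N$ are pairwise distinct, let $C(z)=\det(zI-M)=\prod_{k=1}^N(z-\lambda_k)$, and define the response function $$F(t)=\sum_{k=1}^{N}\frac{\exp(i\lambda_k t)}{C'(\lambda_k)},\qquad C'(\lambda_k)=\prod_{m\neq k}(\lambda_k-\lambda_m),$$ and the elementary symmetric polynomials $S_m[\lambda]=\sum_{1\le k_1<\cdots<k_m\le N}\lambda_{k_1}\cdots\lambda_{k_m}$ (with $S_0=1$). Then for all $t\in\mathbb{C}$, $$\exp(itM)=\sum_{n=0}^{N-1}M^n E_n(t),\qquad E_n(t)=\sum_{m=0}^{N-1-n}(-1)^m S_m[\lambda]\left(-i\frac{d}{dt}\right)^{N-1-n-m}F(t).$$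
   Context: $I$ denotes the $N\times N$ identity matrix and $\exp$ the matrix exponential. The symmetric polynomials $S_m[\lambda]$ can equivalently be computed from traces of powers of $M$ via $\det(I+tM)=\sum_{m=0}^N t^m S_m$. *)

(* Defs.v *)
(* complex numbers = mathcomp-real-closed's R[i]
   for R : realType, taken as the regular algebra (R[i])^o so that it carries
   the normed-module / topology structure of MathComp-Analysis. *)
From HB Require Import structures.
From mathcomp Require Import all_boot all_order all_algebra.
From mathcomp Require Import all_classical all_reals all_analysis.
From mathcomp Require Export complex.
Import Order.TTheory GRing.Theory Num.Theory.
Import numFieldNormedType.Exports.
Set Implicit Arguments. Unset Strict Implicit. Unset Printing Implicit Defensive.
Local Open Scope ring_scope.
Local Open Scope complex_scope.

Definition expC (R : realType) (z : (R[i])^o) : (R[i])^o :=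
  limn (series (fun n => (n`!%:R)^-1 * z ^+ n)).

Definition expmx (R : realType) (N : nat) (A : 'M[(R[i])^o]_N) : 'M[(R[i])^o]_N :=
  limn (series (fun n => (n`!%:R)^-1 *: A ^+ n)).

Definition Cprime (R : realType) (N : nat) (lambda : 'I_N -> (R[i])^o) (k : 'I_N)
  : (R[i])^o := \prod_(m < N | m != k) (lambda k - lambda m).

Definition respF (R : realType) (N : nat) (lambda : 'I_N -> (R[i])^o) (t : (R[i])^o)
  : (R[i])^o := \sum_(k < N) expC ('i * lambda k * t) / Cprime lambda k.

Definition esymS (R : realType) (N : nat) (lambda : 'I_N -> (R[i])^o) (m : nat)
  : (R[i])^o := \sum_(A : {set 'I_N} | #|A| == m) \prod_(k in A) lambda k.

Definition Ecoef (R : realType) (N : nat) (lambda : 'I_N -> (R[i])^o) (n : nat)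
  (t : (R[i])^o) : (R[i])^o :=
  \sum_(m < N - n) (-1) ^+ m * esymS lambda m *
     ((- 'i) ^+ (N.-1 - n - m) * derive1n (N.-1 - n - m) (respF lambda) t).

(* Main.v *)
Require Import Defs.
From HB Require Import structures.
From mathcomp Require Import all_boot all_order all_algebra.
From mathcomp Require Import all_classical all_reals all_analysis.
From mathcomp Require Import complex.
From mathcomp Require Import ring lra zify.
Import Order.TTheory GRing.Theory Num.Theory.
Import numFieldNormedType.Exports.
Local Open Scope ring_scope.
Local Open Scope classical_set_scope.
Local Open Scope ring_scope.
Local Open Scope complex_scope.
Section S.
Variable R : realType.
Local Notation C := ((R[i])^o).

Lemma ReD (x y : R[i]) : complex.Re (x + y) = complex.Re x + complex.Re y.
Proof. by case: x => ? ?; case: y => ? ?. Qed.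
Lemma ImD (x y : R[i]) : complex.Im (x + y) = complex.Im x + complex.Im y.
Proof. by case: x => ? ?; case: y => ? ?. Qed.

Lemma Re_sum n (f : nat -> R[i]) : complex.Re (\sum_(i < n) f i) = \sum_(i < n) complex.Re (f i).
Proof. exact: (big_morph _ ReD). Qed.
Lemma Im_sum n (f : nat -> R[i]) : complex.Im (\sum_(i < n) f i) = \sum_(i < n) complex.Im (f i).
Proof. exact: (big_morph _ ImD). Qed.

Lemma norm_Re_le (x : R[i]) : `|complex.Re x| <= complex.Re `|x|.
Proof.
case: x => a b /=; rewrite -sqrtr_sqr; apply: ler_wsqrtr.
by rewrite lerDl sqr_ge0.
Qed.
Lemma norm_Im_le (x : R[i]) : `|complex.Im x| <= complex.Re `|x|.
Proof.
case: x => a b /=; rewrite -sqrtr_sqr; apply: ler_wsqrtr.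
by rewrite lerDr sqr_ge0.
Qed.

Lemma normC_real (x : R[i]) : `|x| = (complex.Re `|x|)%:C.
Proof. by rewrite RRe_real// normr_real. Qed.

Lemma norm_le_ReIm (x : R[i]) : `|x| <= (`|complex.Re x| + `|complex.Im x|)%:C.
Proof.
case: x => a b; rewrite normc_def /= lecR.
rewrite -[X in _ <= X]ger0_norm ?addr_ge0// -sqrtr_sqr; apply: ler_wsqrtr.
rewrite sqrrD !real_normK ?num_real// lerD2r lerDl mulrn_wge0// mulr_ge0//.
Qed.

Lemma cvg_ReIm (u : nat -> C) (a b : R) :
  (fun n => complex.Re (u n)) @ \oo --> (a : R^o) ->
  (fun n => complex.Im (u n)) @ \oo --> (b : R^o) ->
  u @ \oo --> (a +i* b : C).
Proof.
move=> ha hb; apply/cvgrPdist_lt => e e0.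
have e0' : 0 < complex.Re e / 2.
  by move: e0; rewrite ltcE => /andP[_ ?]; rewrite divr_gt0.
move/cvgrPdist_lt: ha => /(_ _ e0') ha.
move/cvgrPdist_lt: hb => /(_ _ e0') hb.
near=> n.

apply: le_lt_trans (norm_le_ReIm _) _.
rewrite (_ : complex.Re _ = a - complex.Re (u n)); last by case: (u n).
rewrite (_ : complex.Im _ = b - complex.Im (u n)); last by case: (u n).
have -> : e = (complex.Re e)%:C.
  by rewrite RRe_real// gtr0_real.
rewrite ltcR (splitr (complex.Re e)); apply: ltrD; near: n; [exact: ha|exact: hb].
Unshelve. all: end_near.
Qed.


Definition ec (z : C) : nat -> C := fun n => (n`!%:R)^-1 * z ^+ n.

Lemma norm_ec (z : C) n : `|ec z n| = (exp_coeff (complex.Re `|z|) n)%:C.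
Proof.
rewrite /ec /exp_coeff /= normrM normrX normfV normr_nat.
rewrite [`|z|]normC_real rmorphM rmorphXn /= fmorphV /= rmorph_nat.
by rewrite mulrC.
Qed.

Lemma cvg_series_R (f : nat -> R) (x : R) :
  (forall n, `|f n| <= exp_coeff x n) -> cvgn (series (f : nat -> R^o)).
Proof.
move=> hf; apply: (@normed_cvg R R^o).
apply: (@series_le_cvg _ _ (exp_coeff `|x|)).
- by move=> n; rewrite normr_ge0.
- by move=> n; rewrite exp_coeff_ge0.
- move=> n; apply: le_trans (hf n) _.
  rewrite /exp_coeff /= ler_wpM2r ?invr_ge0 ?ler0n//.
  by rewrite -normrX ler_norm.
- exact: is_cvg_series_exp_coeff.
Qed.

Lemma cvg_expC (z : C) : series (ec z) @ \oo --> expC z.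
Proof.
have hRe : cvgn (series ((fun n => complex.Re (ec z n)) : nat -> R^o)).
  apply: (@cvg_series_R _ (complex.Re `|z|)) => n.
  by apply: le_trans (norm_Re_le _) _; rewrite norm_ec.
have hIm : cvgn (series ((fun n => complex.Im (ec z n)) : nat -> R^o)).
  apply: (@cvg_series_R _ (complex.Re `|z|)) => n.
  by apply: le_trans (norm_Im_le _) _; rewrite norm_ec.
have H : series (ec z) @ \oo --> (limn (series ((fun n => complex.Re (ec z n)) : nat -> R^o)) +i*
   limn (series ((fun n => complex.Im (ec z n)) : nat -> R^o)) : C).
  apply: cvg_ReIm.
    rewrite (_ : (fun n => _) = series ((fun n => complex.Re (ec z n)) : nat -> R^o)) //.
    by apply/funext => n; rewrite !seriesEord /= Re_sum.
  rewrite (_ : (fun n => _) = series ((fun n => complex.Im (ec z n)) : nat -> R^o)) //.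
  by apply/funext => n; rewrite !seriesEord /= Im_sum.
by rewrite /expC -/(ec z) (cvg_lim _ H).
Qed.


Lemma exprD_split (a b : C) n : (a + b) ^+ n.+1 =
  a ^+ n.+1 + a ^+ n * b *+ n.+1 +
  \sum_(i < n) (a ^+ (n.+1 - i.+2) * b ^+ i.+2) *+ 'C(n.+1, i.+2).
Proof.
rewrite exprDn big_ord_recl big_ord_recl /= !expr0 !mulr1 bin0 mulr1n.
rewrite subn0 subn1 /= expr1 bin1 addrA; congr (_ + _); apply: eq_bigr => i _; rewrite /bump /=.
Qed.


Lemma D_bound (z w : C) n : `|w| <= 1 ->
  `|(z + w) ^+ n.+1 - z ^+ n.+1 - z ^+ n * w *+ n.+1| <=
  `|w| ^+ 2 * (`|z| + 1) ^+ n.+1.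
Proof.
move=> w1.
rewrite exprD_split.
have -> : forall A B S : C, A + B + S - A - B = S by move=> *; ring.
apply: le_trans (ler_norm_sum _ _ _) _.
apply: (@le_trans _ _ (\sum_(i<n) `|w|^+2 * (`|z| ^+ (n.+1 - i.+2) *+ 'C(n.+1, i.+2)))).
  apply: ler_sum => i _; rewrite normrMn normrM !normrX -mulrnAl mulrC.
  apply: ler_wpM2r; first by rewrite mulrn_wge0 ?exprn_ge0.
  by rewrite -addn2 exprD ler_piMl ?exprn_ge0 ?exprn_ile1.
rewrite -mulr_sumr; apply: ler_wpM2l; first by rewrite exprn_ge0.
rewrite exprD_split; under [X in _ <= _ + X]eq_bigr do rewrite expr1n mulr1.
rewrite -[X in X <= _]add0r; apply: lerD; last exact: le_refl.
  by rewrite addr_ge0 ?mulrn_wge0 ?mulr_ge0 ?exprn_ge0.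
Qed.


Lemma series_diff (z w : C) K :
  series (ec (z + w)) K.+1 - series (ec z) K.+1 - w * series (ec z) K =
  \sum_(n < K) ((n.+1)`!%:R)^-1 * ((z + w) ^+ n.+1 - z ^+ n.+1 - z ^+ n * w *+ n.+1).
Proof.
rewrite !seriesEord /= !big_ord_recl /ec /= !expr0 !mulr1 fact0 invr1.
rewrite mulr_sumr.
have -> : forall (a b c : C), 1 + a - (1 + b) - c = a - b - c by move=> *; ring.
rewrite -!sumrB; apply: eq_bigr => i _.
rewrite /bump /= add1n factS natrM invfM -mulr_natr.
have h : (i.+1%:R : C) != 0 by rewrite pnatr_eq0.
have h2 : (i`!%:R : C) != 0 by rewrite pnatr_eq0 -lt0n fact_gt0.
field.
by rewrite h2 addrC natr1 h.
Qed.


Lemma expc_C (x : R) n : (exp_coeff x n)%:C = (x%:C) ^+ n / (n`!%:R) :> C.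
Proof.
rewrite (_ : exp_coeff x n = x ^+ n / n`!%:R) //.
by rewrite rmorphM rmorphXn fmorphV rmorph_nat.
Qed.

Lemma lim_norm_le (u : nat -> C) (l B : C) :
  u @ \oo --> l -> (forall n, `|u n| <= B) -> `|l| <= B.
Proof.
move=> ul hB; apply/ler_addgt0Pr => e e0.
move/cvgrPdist_lt: ul => /(_ e e0) [N _ hN].
have := hN N (leqnn N) => /= h.
rewrite -[l](subrK (u N)) (le_trans (ler_normD _ _))// addrC.
by apply: lerD => //; apply: ltW.
Qed.

Lemma exp_est (z w : C) : `|w| <= 1 ->
  `|expC (z + w) - expC z - w * expC z| <=
  `|w| ^+ 2 * (expR (complex.Re `|z| + 1))%:C.
Proof.
move=> w1.
apply: (@lim_norm_le (fun K => series (ec (z + w)) K.+1 - series (ec z) K.+1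
   - w * series (ec z) K)).
  apply: cvgB; first apply: cvgB.
  - by have := cvg_expC (z + w); rewrite -cvg_shiftS.
  - by have := cvg_expC z; rewrite -cvg_shiftS.
  - exact: (cvgZ (cvg_cst w) (cvg_expC z)).
move=> K; rewrite series_diff.
apply: le_trans (ler_norm_sum _ _ _) _.
apply: (@le_trans _ _ (\sum_(n<K) `|w|^+2 * (exp_coeff (complex.Re `|z| + 1) n.+1)%:C)).
  apply: ler_sum => n _; rewrite normrM normfV normr_nat.
  rewrite expc_C; have -> : (complex.Re `|z| + 1)%:C = `|z| + 1 :> C.
    by rewrite [LHS]rmorphD rmorph1 [in RHS]normC_real.
  rewrite mulrCA mulrC mulrA; apply: ler_wpM2r; first by rewrite invr_ge0 ler0n.
  by rewrite [leRHS]mulrC; apply: D_bound.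

rewrite -mulr_sumr ler_wpM2l ?exprn_ge0 // -rmorph_sum lecR.
have r0 : 0 <= complex.Re `|z| + 1.
  by rewrite addr_ge0// (le_trans _ (norm_Re_le z)).
apply: (@le_trans _ _ (series (exp_coeff (complex.Re `|z| + 1)) K.+1)).
  rewrite seriesEord /= big_ord_recl /= lerDr; exact: exp_coeff_ge0.
apply: nondecreasing_cvgn_le; last exact: is_cvg_series_exp_coeff.
by apply: nondecreasing_series => n _ _; apply: exp_coeff_ge0.
Qed.


Lemma expC_der (a z : C) :
  (fun h : C => h^-1 *: (expC (a * (h + z)) - expC (a * z))) @ 0^' -->
  a * expC (a * z).
Proof.
apply/cvgrPdist_lt => e e0.
set B : C := (expR (complex.Re `|a * z| + 1))%:C.
have B0 : 0 <= B by rewrite /B ler0c expR_ge0.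
have d10 : 0 < (`|a| + 1)^-1 by rewrite invr_gt0 ltr_pwDr.
have d20 : 0 < e / (`|a| ^+ 2 * B + 1).
  by rewrite divr_gt0 // ltr_pwDr // mulr_ge0 ?exprn_ge0.
near=> h.
have hn0 : h != 0 by near: h; exact: nbhs_dnbhs_neq.
have h1 : `|h| < (`|a| + 1)^-1 by near: h; exact: dnbhs0_lt.
have h2 : `|h| < e / (`|a| ^+ 2 * B + 1) by near: h; exact: dnbhs0_lt.
have ah1 : `|a * h| <= 1.
  rewrite normrM; apply: ltW; move: h1; rewrite -(ltr_pM2l (ltr_pwDr ltr01 (normr_ge0 a))).
  rewrite mulfV ?gt_eqF ?ltr_pwDr//; apply: le_lt_trans.
  by rewrite ler_wpM2r // lerDl.
have -> : a * expC (a * z) - h^-1 *: (expC (a * (h + z)) - expC (a * z)) =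
   - (h^-1 * (expC (a * z + a * h) - expC (a * z) - (a * h) * expC (a * z))).
  rewrite mulrDr [a * h + _]addrC.
  rewrite -[_ *: _]/(h^-1 * _).
  by field.
rewrite normrN normrM normfV.
apply: (@le_lt_trans _ _ (`|h|^-1 * (`|a * h| ^+ 2 * B))).
  by rewrite ler_wpM2l ?invr_ge0 ?normr_ge0 // exp_est.
have -> : `|h|^-1 * (`|a * h| ^+ 2 * B) = `|h| * (`|a| ^+ 2 * B).
  have : `|h| != 0 by rewrite normr_eq0.
  by rewrite normrM exprMn => hh; field.
apply: (@le_lt_trans _ _ (`|h| * (`|a| ^+ 2 * B + 1))).
  by rewrite ler_wpM2l // lerDl.
by rewrite -ltr_pdivlMr // ltr_pwDr // mulr_ge0 ?exprn_ge0.
Unshelve. all: end_near.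
Qed.


Lemma cvg_sum_ord {V : normedModType C} {T : Type} {F : set_system T} {FF : Filter F} n
   (f : 'I_n -> T -> V) (l : 'I_n -> V) :
  (forall k, f k @ F --> l k) ->
  (fun x => \sum_(k < n) f k x) @ F --> \sum_(k < n) l k.
Proof.
elim: n f l => [|n IH] f l hf.
  rewrite big_ord0 (_ : (fun _ => _) = fun _ => 0); first exact: cvg_cst.
  by apply/funext => x; rewrite big_ord0.
rewrite big_ord_recr /= (_ : (fun _ => _) = (fun x => \sum_(k < n) f (widen_ord (leqnSn n) k) x) + f ord_max); last first.
  by apply/funext => x; rewrite big_ord_recr.
apply: cvgD; last exact: hf.
exact: (IH (fun k => f (widen_ord (leqnSn n) k))).
Qed.

Lemma derive1_sum n (a c : 'I_n -> C) :
  derive1 (fun t : C => \sum_(k < n) c k * expC (a k * t)) =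
  (fun t => \sum_(k < n) c k * a k * expC (a k * t)).
Proof.
apply/funext => z; rewrite /derive1; apply: cvg_lim; first exact: norm_hausdorff.
rewrite (_ : (fun h => _) = (fun h : C => \sum_(k < n) c k * (h^-1 *: (expC (a k * (h + z)) - expC (a k * z))))); last first.
  apply/funext => h; rewrite -sumrB scaler_sumr; apply: eq_bigr => k _.
  by rewrite -mulrBr; exact: scalerAr.
apply: cvg_sum_ord => k; rewrite -mulrA.
exact: (cvgZ (cvg_cst (c k)) (expC_der (a k) z)).
Qed.

Lemma derive1n_sum n (a c : 'I_n -> C) j :
  derive1n j (fun t : C => \sum_(k < n) c k * expC (a k * t)) =
  (fun t => \sum_(k < n) (c k * a k ^+ j) * expC (a k * t)).
Proof.
elim: j => [|j IH].
  by apply/funext => t; apply: eq_bigr => k _; rewrite expr0 mulr1.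
rewrite derive1nS IH derive1_sum; apply/funext => t; apply: eq_bigr => k _.
by rewrite exprSr mulrA.
Qed.


Section A.
Variables (n' : nat) (lambda : 'I_n'.+1 -> C).
Local Notation N := n'.+1.
Definition Cp : {poly C} := \prod_(k < N) ('X - (lambda k)%:P).
Definition qk (k : 'I_N) : {poly C} := \prod_(m < N | m != k) ('X - (lambda m)%:P).

Lemma Cp_coef j : (j <= N)%N -> Cp`_j = (-1) ^+ (N - j) * esymS lambda (N - j).
Proof.
rewrite /Cp (_ : \prod_(k < N) _ = \prod_(p <- [seq lambda i | i <- index_enum 'I_N]) ('X - p%:P)); last by rewrite big_map.
have hs : size [seq lambda i | i <- index_enum 'I_N] = N by rewrite size_map [index_enum _]unlock -enumT size_enum_ord.
move=> hj; rewrite coef_prod_XsubC ?hs //.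
have hnth : forall i : 'I_N, [seq lambda i | i <- index_enum 'I_N]`_i = lambda i.
  move=> i; rewrite (nth_map i) [index_enum _]unlock -?enumT ?size_enum_ord //.
  by rewrite nth_ord_enum.
move: hnth hs; move: (size _) => m hnth hm. 
congr (_ * _); rewrite /esymS; apply: eq_big => // I _; apply: eq_bigr => i _; exact: hnth.
Qed.


Lemma coef_lin (q : {poly C}) (a : C) n d :
  q`_n = \sum_(i < d) (('X - a%:P) * q)`_(n.+1 + i) * a ^+ i + a ^+ d * q`_(n + d).
Proof.
elim: d => [|d IH]; first by rewrite big_ord0 add0r expr0 mul1r addn0.
rewrite IH big_ord_recr /= -addrA; congr (_ + _).
rewrite mulrBl coefB coefXM coefCM addSn /= addnS exprSr.
ring.
Qed.

Lemma Cp_split k : Cp = ('X - (lambda k)%:P) * qk k.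
Proof. by rewrite /Cp (bigD1 k). Qed.

Lemma qk_neq0 k : qk k != 0.
Proof. by apply: monic_neq0; apply: monic_prod_XsubC. Qed.

Lemma size_qk k : size (qk k) = N.
Proof.
have h : size Cp = N.+1.
  by rewrite /Cp size_prod_XsubC [index_enum _]unlock -enumT size_enum_ord.
move: h; rewrite (Cp_split k) size_mul ?polyXsubC_eq0 ?qk_neq0 // size_XsubC.
by case.
Qed.


Lemma qk_coef k n : (n < N)%N -> (qk k)`_n =
  \sum_(m < N - n) (-1) ^+ m * esymS lambda m * lambda k ^+ (N.-1 - n - m).
Proof.
move=> hn; rewrite (coef_lin (qk k) (lambda k) n (N - n)) -Cp_split.
rewrite subnKC ?(ltnW hn) // [(qk k)`_N]nth_default ?size_qk // mulr0 addr0.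
rewrite (reindex_inj rev_ord_inj) /=; apply: eq_bigr => i _.
have hi := ltn_ord i.
have -> : (n.+1 + (N - n - i.+1) = N - i)%N by lia.
rewrite Cp_coef; last by lia.
have -> : (N - (N - i) = i)%N by lia.
have -> : (N - n - i.+1 = N.-1 - n - i)%N by lia.
by [].
Qed.


Variable M : 'M[C]_N.
Hypothesis inj : injective lambda.
Hypothesis hchar : char_poly M = \prod_(k < N) ('X - (lambda k)%:P).

Definition Pk k := horner_mx M ((Cprime lambda k)^-1 *: qk k).

Lemma Cprime_neq0 k : Cprime lambda k != 0.
Proof.
apply/prodf_neq0 => m hm; rewrite subr_eq0; apply: contra hm => /eqP /inj ->.
by [].
Qed.

Lemma qk_horner k j : (qk k).[lambda j] = if j == k then Cprime lambda k else 0.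
Proof.
rewrite /qk horner_prod; case: eqP => [->|/eqP hjk].
  by apply: eq_bigr => m _; rewrite hornerXsubC.
rewrite (bigD1 j) //= hornerXsubC subrr mul0r //.
Qed.

Lemma lagrange p : horner_mx M p = \sum_(k < N) p.[lambda k] *: Pk k.
Proof.
set L := \sum_(k < N) p.[lambda k] *: ((Cprime lambda k)^-1 *: qk k).
have hroots : forall j, (p - L).[lambda j] = 0.
  move=> j; rewrite hornerD hornerN horner_sum (bigD1 j) //= big1 ?addr0.
    rewrite !hornerZ qk_horner eqxx mulVf ?Cprime_neq0 // mulr1 subrr //.
  move=> i hij; rewrite !hornerZ qk_horner eq_sym (negbTE hij) !mulr0 //.
have h1 : all (root (p - L)) [seq lambda i | i <- index_enum 'I_N].
  by apply/allP => x /mapP [j _ ->]; rewrite /root hroots.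
have h2 : uniq_roots [seq lambda i | i <- index_enum 'I_N].
  by rewrite uniq_rootsE map_inj_uniq // index_enum_uniq.
have [q' hq'] := uniq_roots_prod_XsubC h1 h2.
have hz : horner_mx M (p - L) = 0.
  rewrite hq' rmorphM /= big_map.
  have -> : \prod_(j <- index_enum 'I_N) ('X - (lambda j)%:P) = char_poly M by rewrite hchar.
  by rewrite Cayley_Hamilton mulr0.
move/eqP: hz; rewrite rmorphB /= subr_eq0 => /eqP ->.
rewrite /L linear_sum /=; apply: eq_bigr => k _; rewrite linearZ //.
Qed.

Lemma powM j : M ^+ j = \sum_(k < N) lambda k ^+ j *: Pk k.
Proof.
have := lagrange 'X^j; rewrite rmorphXn /= horner_mx_X => ->.
by apply: eq_bigr => k _; rewrite hornerXn.
Qed.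

Lemma horner_wide (p : {poly C}) : (size p <= N)%N ->
  horner_mx M p = \sum_(i < N) p`_i *: M ^+ i.
Proof.
move=> hp.
have hp' : p = \poly_(i < N) p`_i.
  apply/polyP => i; rewrite coef_poly; case: ltnP => // h.
  by rewrite nth_default // (leq_trans hp h).
rewrite {1}hp' poly_def linear_sum /=; apply: eq_bigr => i _.
by rewrite linearZ /= rmorphXn /= horner_mx_X.
Qed.

Lemma expmx_eq (s : C) : expmx (s *: M) = \sum_(k < N) expC (s * lambda k) *: Pk k.
Proof.
rewrite /expmx.
have -> : series (fun n => (n`!%:R)^-1 *: (s *: M) ^+ n) =
    fun K => \sum_(k < N) series (ec (s * lambda k)) K *: Pk k.
  apply/funext => K; rewrite seriesEord /=.
  under eq_bigr do rewrite exprZn powM scalerA scaler_sumr.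
  rewrite exchange_big /=; apply: eq_bigr => k _.
  rewrite seriesEord /= scaler_suml; apply: eq_bigr => i _.
  by rewrite scalerA /ec exprMn mulrA.
apply: cvg_lim; first exact: norm_hausdorff.
apply: cvg_sum_ord => k; exact: (cvgZ (cvg_expC _) (cvg_cst _)).
Qed.

Lemma respF_eq : respF lambda =
  (fun t => \sum_(k < N) (Cprime lambda k)^-1 * expC (('i * lambda k) * t)).
Proof. by apply/funext => t; apply: eq_bigr => k _; rewrite mulrC. Qed.

Lemma Ecoef_eq n t : (n < N)%N -> Ecoef lambda n t =
  \sum_(k < N) ((Cprime lambda k)^-1 * expC ('i * lambda k * t)) * (qk k)`_n.
Proof.
move=> hn; rewrite /Ecoef respF_eq.
have hi : (- 'i) * 'i = 1 :> C by rewrite mulNr -expr2 sqr_i opprK.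
transitivity (\sum_(m < N - n) \sum_(k < N)
   ((Cprime lambda k)^-1 * expC ('i * lambda k * t)) *
   ((-1) ^+ m * esymS lambda m * lambda k ^+ (N.-1 - n - m))).
  apply: eq_bigr => m _.
  rewrite (@derive1n_sum N (fun k => 'i * lambda k) (fun k => (Cprime lambda k)^-1)).
  move: (esymS lambda m) => S; rewrite !mulr_sumr; apply: eq_bigr => k _.
  rewrite exprMn.
  set A := (- 'i) ^+ _; set B := 'i ^+ _.
  have hAB : A * B = 1 by rewrite /A /B -exprMn hi expr1n.
  transitivity ((A * B) * ((-1) ^+ m * S *
     ((Cprime lambda k)^-1 * (lambda k ^+ (N.-1 - n - m)) * expC ('i * lambda k * t)))).
    by ring.
  by rewrite hAB mul1r; ring.
rewrite exchange_big /=; apply: eq_bigr => k _.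
by rewrite qk_coef // mulr_sumr.
Qed.

Lemma main_eq t : expmx (('i * t) *: M) = \sum_(n < N) Ecoef lambda n t *: M ^+ n.
Proof.
rewrite expmx_eq.
transitivity (\sum_(n < N) \sum_(k < N)
  (((Cprime lambda k)^-1 * expC ('i * lambda k * t)) * (qk k)`_n) *: M ^+ n); last first.
  by apply: eq_bigr => n _; rewrite Ecoef_eq // scaler_suml.
rewrite exchange_big /=; apply: eq_bigr => k _.
under eq_bigr do rewrite -scalerA.
rewrite -scaler_sumr -horner_wide ?size_qk //.
rewrite /Pk linearZ /= scalerA mulrC mulrAC.
by [].
Qed.

End A.
End S.

Theorem mainTheorem1 (R : realType) (N : nat) (M : 'M[(R[i])^o]_N)
    (lambda : 'I_N -> (R[i])^o) :
  (0 < N)%N ->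
  injective lambda ->
  char_poly M = \prod_(k < N) ('X - (lambda k)%:P) ->
  forall t : (R[i])^o,
    expmx (('i * t) *: M) = \sum_(n < N) Ecoef lambda n t *: M ^+ n.
Proof.
case: N M lambda => [//|n'] M lambda _ inj hchar t.
exact: main_eq.
Qed.
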